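(* Let $X$ be an irreducible affine variety over $\mathbb{C}$, $\mathcal{F}$ an algebraic foliation on $X$, and $Y\subseteq X$ an irreducible Zariski closed subset. Then for all $f,g\in\mathcal{O}_X$: (1) $\mathrm{ord}_{\mathcal{F},Y}(f+g)\ge\min\{\mathrm{ord}_{\mathcal{F},Y}(f),\mathrm{ord}_{\mathcal{F},Y}(g)\}$, with equality if $\mathrm{ord}_{\mathcal{F},Y}(f)\ne\mathrm{ord}_{\mathcal{F},Y}(g)$; (2) $\mathrm{ord}_{\mathcal{F},Y}(fg)=\mathrm{ord}_{\mathcal{F},Y}(f)+\mathrm{ord}_{\mathcal{F},Y}(g)$ (with the convention that a sum involving $+\infty$ is $+\infty$).
   Context: $\mathcal{O}_X$ is the ring of regular functions on $X$; an algebraic foliation $\mathcal{F}$ is a collection of $\mathbb{C}$-derivations of $\mathcal{O}_X$ stable under Lie bracket; $M_{\mathcal{F}}$ is the $\mathcal{O}_X$-module generated by $\mathcal{F}$. $I_Y$ is the ideal of regular functions vanishing on $Y$. Fix generators $\partial_1,\dots,\partial_r$ of $M_{\mathcal{F}}$; for $I=(i_1,\dots,i_m)\in\{1,\dots,r\}^m$ set $\partial_I=\partial_{i_1}\circ\cdots\circ\partial_{i_m}$, $|I|=m$, with $\partial_\emptyset=\mathrm{id}$ and $|\emptyset|=0$. The contact order is $\mathrm{ord}_{\mathcal{F},Y}(f)=\inf\{|I|:\ \partial_I(f)\notin I_Y\}\in\mathbb{N}\cup\{+\infty\}$; it does not depend on the choice of generators. *)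

(* Defs.v *)
From HB Require Import structures.
From mathcomp Require Import all_boot all_order all_algebra.
From mathcomp Require Import boolp.
From mathcomp Require Import reals Rstruct.
From mathcomp.real_closed Require Import complex.
From Stdlib Require Import Rdefinitions.

Set Implicit Arguments.
Unset Strict Implicit.
Unset Printing Implicit Defensive.

Import Order.TTheory GRing.Theory Num.Theory.
Local Open Scope ring_scope.

Definition CC : fieldType := complex Rdefinitions.R.

(** An irreducible affine variety X over C is encoded by its ring of regular
    functions O_X = A: a finitely generated commutative C-algebra which is an
    integral domain.  The points of X are the C-algebra morphisms A -> C
    (Hilbert's Nullstellensatz), and a regular function f is evaluated at the
    point phi as phi f. *)

Section Defs.
Variable A : comAlgType CC.

Inductive in_subalg (s : seq A) : A -> Prop :=
  | subalg_gen x : x \in s -> in_subalg s x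
  | subalg_scal (c : CC) : in_subalg s (c%:A)
  | subalg_add x y : in_subalg s x -> in_subalg s y -> in_subalg s (x + y)
  | subalg_mul x y : in_subalg s x -> in_subalg s y -> in_subalg s (x * y).

Definition finitely_generated_algebra : Prop :=
  exists s : seq A, forall x : A, in_subalg s x.

Definition integral_domain : Prop :=
  (1 : A) != 0 /\ forall a b : A, a * b = 0 -> a = 0 \/ b = 0.

Definition is_point (phi : A -> CC) : Prop :=
  [/\ forall a b, phi (a + b) = phi a + phi b,
      forall a b, phi (a * b) = phi a * phi b,
      phi 1 = 1 &
      forall (c : CC) a, phi (c *: a) = c * phi a].

Definition zariski_closed (Y : (A -> CC) -> Prop) : Prop :=
  exists S : A -> Prop,
    forall phi, Y phi <-> (is_point phi /\ forall f, S f -> phi f = 0).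

Definition irreducible_closed (Y : (A -> CC) -> Prop) : Prop :=
  [/\ zariski_closed Y,
      exists phi, Y phi &
      forall Y1 Y2, zariski_closed Y1 -> zariski_closed Y2 ->
        (forall phi, Y phi -> Y1 phi \/ Y2 phi) ->
        (forall phi, Y phi -> Y1 phi) \/ (forall phi, Y phi -> Y2 phi)].

Definition vanishes_on (Y : (A -> CC) -> Prop) (f : A) : Prop :=
  forall phi, Y phi -> phi f = 0.

Definition is_derivation (D : A -> A) : Prop :=
  [/\ forall a b, D (a + b) = D a + D b,
      forall (c : CC) a, D (c *: a) = c *: D a &
      forall a b, D (a * b) = a * D b + D a * b].

Definition algebraic_foliation (F : (A -> A) -> Prop) : Prop :=
  (forall D, F D -> is_derivation D) /\
  (forall D1 D2, F D1 -> F D2 -> F (fun x => D1 (D2 x) - D2 (D1 x))).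

Definition in_module_gen (F : (A -> A) -> Prop) (D : A -> A) : Prop :=
  exists (n : nat) (a : 'I_n -> A) (E : 'I_n -> A -> A),
    (forall i, F (E i)) /\ forall x, D x = \sum_(i < n) a i * E i x.

Definition generates_module (F : (A -> A) -> Prop) (r : nat)
    (d : 'I_r -> A -> A) : Prop :=
  (forall i, in_module_gen F (d i)) /\
  (forall D, in_module_gen F D ->
     exists c : 'I_r -> A, forall x, D x = \sum_(i < r) c i * d i x).

Definition iter_der (r : nat) (d : 'I_r -> A -> A) (I : seq 'I_r) (f : A) : A :=
  foldr (fun i g => d i g) f I.

(** Contact order, valued in N u {+oo}; [None] stands for +oo. *)
Definition reaches_order (r : nat) (d : 'I_r -> A -> A)
    (Y : (A -> CC) -> Prop) (f : A) (k : nat) : Prop :=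
  exists I : seq 'I_r, size I = k /\ ~ vanishes_on Y (iter_der d I f).

Lemma reaches_order_ex (r : nat) (d : 'I_r -> A -> A) Y f :
  (exists k, reaches_order d Y f k) ->
  exists k, (fun k => `[< reaches_order d Y f k >]) k.
Proof. by move=> [k Hk]; exists k; apply/asboolP. Qed.

Definition contact_order (r : nat) (d : 'I_r -> A -> A)
    (Y : (A -> CC) -> Prop) (f : A) : option nat :=
  match pselect (exists k, reaches_order d Y f k) with
  | left H => Some (ex_minn (reaches_order_ex H))
  | right _ => None
  end.

End Defs.

Definition enat_le (x y : option nat) : Prop :=
  match x, y with
  | _, None => True
  | None, Some _ => False
  | Some m, Some n => leq m n
  end.

Definition enat_min (x y : option nat) : option nat :=
  match x, y with
  | None, y => y
  | x, None => x
  | Some m, Some n => Some (minn m n)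
  end.

Definition enat_add (x y : option nat) : option nat :=
  match x, y with
  | Some m, Some n => Some (addn m n)
  | _, _ => None
  end.

(* Main.v *)
Require Import Defs.
From HB Require Import structures.
From mathcomp Require Import all_boot all_order all_algebra.
From mathcomp Require Import boolp reals Rstruct.
From mathcomp.real_closed Require Import complex.
From mathcomp Require Import ring zify.
Set Implicit Arguments.
Unset Strict Implicit.
Local Open Scope ring_scope.
Import GRing.Theory Num.Theory.
Section Additive.
Variable A : comAlgType CC.

Definition addmap (D : A -> A) := forall a b, D (a + b) = D a + D b.

Lemma addf0 {D} : addmap D -> D 0 = 0.
Proof. by move=> h; apply: (addrI (D 0)); rewrite -h !addr0. Qed.

Lemma addfN {D} : addmap D -> forall x, D (- x) = - D x.
Proof. move=> h x; apply/eqP; rewrite -subr_eq0 opprK -h addNr.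
by rewrite (addf0 h). Qed.

Lemma addfB {D} : addmap D -> forall x y, D (x - y) = D x - D y.
Proof. by move=> h x y; rewrite h addfN. Qed.

Lemma addf_sum {D} {n : nat} (G : 'I_n -> A) : addmap D ->
  D (\sum_(i < n) G i) = \sum_(i < n) D (G i).
Proof.
move=> h; elim/big_rec2: _ => [|i y1 y2 _ <-]; first exact: addf0.
by rewrite h.
Qed.

Lemma der_addf {D} : is_derivation D -> addmap D.
Proof. by case. Qed.

Section Module.
Variable F : (A -> A) -> Prop.
Hypothesis hF : algebraic_foliation F.

Let M := in_module_gen F.

Lemma M_ext D D' : (forall x, D x = D' x) -> M D -> M D'.
Proof. by move=> e [n [a [E [hE hD]]]]; exists n, a, E; split=> // x; rewrite -e. Qed.

Lemma M_F E : F E -> M E.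
Proof. move=> hE; exists 1%N, (fun _ => 1), (fun _ => E); split=> // x.
by rewrite big_ord1 mul1r. Qed.

Lemma M_0 : M (fun _ => 0).
Proof. exists 0%N, (fun _ => 0), (fun _ => id); split=> [[]//|x].
by rewrite big_ord0. Qed.

Lemma M_add D1 D2 : M D1 -> M D2 -> M (fun x => D1 x + D2 x).
Proof.
move=> [n1 [a1 [E1 [h1 e1]]]] [n2 [a2 [E2 [h2 e2]]]].
exists (n1 + n2)%N, (fun k => match split k with inl i => a1 i | inr j => a2 j end),
  (fun k => match split k with inl i => E1 i | inr j => E2 j end); split.
  by move=> k; case: (split k).
move=> x; rewrite big_split_ord /= e1 e2; congr (_ + _); apply: eq_bigr => i _.
  by have := unsplitK (inl i : 'I_n1 + 'I_n2) => /= ->.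
by have := unsplitK (inr i : 'I_n1 + 'I_n2) => /= ->.
Qed.

Lemma M_scale (a : A) D : M D -> M (fun x => a * D x).
Proof.
move=> [n [b [E [h e]]]]; exists n, (fun i => a * b i), E; split=> // x.
by rewrite e mulr_sumr; apply: eq_bigr => i _; rewrite mulrA.
Qed.

Lemma M_sum (n : nat) (D : 'I_n -> A -> A) : (forall i, M (D i)) ->
  M (fun x => \sum_(i < n) D i x).
Proof.
elim: n D => [|n IH] D hD.
  by apply: (@M_ext (fun _ => 0)); [move=> x; rewrite big_ord0 | exact: M_0].
apply: (@M_ext (fun x => \sum_(i < n) D (widen_ord (leqnSn n) i) x + D ord_max x)).
  by move=> x; rewrite big_ord_recr.
apply: M_add => //; exact: (IH (fun i => D (widen_ord (leqnSn n) i))).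
Qed.

Lemma M_bracket1 (a1 a2 : A) E1 E2 : F E1 -> F E2 ->
  M (fun x => a1 * E1 (a2 * E2 x) - a2 * E2 (a1 * E1 x)).
Proof.
move=> h1 h2; have [hd1 _] := hF.
have [_ _ L1] := hd1 _ h1; have [_ _ L2] := hd1 _ h2.
have hb := hF.2 _ _ h1 h2.
apply: (@M_ext (fun x => ((a1 * a2) * (E1 (E2 x) - E2 (E1 x)) +
   (a1 * E1 a2) * E2 x) + (- (a2 * E2 a1)) * E1 x)).
  by move=> x; rewrite L1 L2; ring.
apply: M_add; [apply: M_add|]; apply: M_scale => //; exact: M_F.
Qed.

Lemma M_der D : M D -> is_derivation D.
Proof.
move=> [n [a [E [h e]]]]; have [hd1 _] := hF.
split.
- move=> x y; rewrite !e -big_split; apply: eq_bigr => i _ /=.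
  by have [-> _ _] := hd1 _ (h i); rewrite mulrDr.
- move=> c x; rewrite !e scaler_sumr; apply: eq_bigr => i _ /=.
  by have [_ -> _] := hd1 _ (h i); rewrite scalerAr.
- move=> x y; rewrite !e mulr_sumr mulr_suml -big_split; apply: eq_bigr => i _ /=.
  by have [_ _ ->] := hd1 _ (h i); ring.
Qed.

Lemma gen_bracket (r : nat) (d : 'I_r -> A -> A) : generates_module F d ->
  forall i j, exists b : 'I_r -> A,
    forall x, d i (d j x) - d j (d i x) = \sum_(k < r) b k * d k x.
Proof.
move=> [hgen hsp] i j; apply: hsp.
have [n1 [a1 [E1 [h1 e1]]]] := hgen i.
have [n2 [a2 [E2 [h2 e2]]]] := hgen j.
have [hd1 _] := hF.
apply: (@M_ext (fun x => \sum_(l < n1) \sum_(p < n2)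
   (a1 l * E1 l (a2 p * E2 p x) - a2 p * E2 p (a1 l * E1 l x)))).
  move=> x; rewrite (e1 (d j x)) (e2 (d i x)) (e2 x) (e1 x); apply/esym.
  under eq_bigr => l _ do rewrite (addf_sum _ (der_addf (hd1 _ (h1 l)))) mulr_sumr.
  under [X in _ - X]eq_bigr => p _ do rewrite (addf_sum _ (der_addf (hd1 _ (h2 p)))) mulr_sumr.
  rewrite [X in _ - X]exchange_big /= -sumrB; apply: eq_bigr => l _.
  by rewrite -sumrB.
apply: M_sum => l; apply: M_sum => p; exact: M_bracket1.
Qed.

End Module.
End Additive.

Section Points.
Variable A : comAlgType CC.

Lemma pt0 (phi : A -> CC) : is_point phi -> phi 0 = 0.
Proof. by case=> h _ _ _; apply: (addrI (phi 0)); rewrite -h !addr0. Qed.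
Lemma ptN (phi : A -> CC) x : is_point phi -> phi (- x) = - phi x.
Proof. move=> hp; have [h _ _ _] := hp; apply/eqP; rewrite -subr_eq0 opprK -h addNr.
by rewrite pt0. Qed.

Variable Y : (A -> CC) -> Prop.
Hypothesis hYp : forall phi, Y phi -> is_point phi.
Let P := vanishes_on Y.

Lemma VP0 : P 0. Proof. by move=> phi /hYp /pt0. Qed.
Lemma VPD x y : P x -> P y -> P (x + y).
Proof. move=> hx hy phi hphi; have [-> _ _ _] := hYp hphi. by rewrite hx // hy // addr0. Qed.
Lemma VPN x : P x -> P (- x).
Proof. move=> hx phi hphi; by rewrite ptN ?hx ?oppr0 //; apply: hYp. Qed.
Lemma VPM x y : P x -> P (y * x).
Proof. move=> hx phi hphi; have [_ -> _ _] := hYp hphi. by rewrite hx // mulr0. Qed.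

End Points.

Lemma CC_natr_neq0 (n : nat) : (0 < n)%N -> (n%:R : CC) != 0.
Proof. by move=> h; rewrite /CC pnatr_eq0 -lt0n. Qed.

Section Big.
Variable A : comAlgType CC.
Variable Y : (A -> CC) -> Prop.
Hypothesis hYp : forall phi, Y phi -> is_point phi.
Let P := vanishes_on Y.
Hypothesis hprime : forall x y, P (x * y) -> P x \/ P y.
Variable r : nat.
Variable d : 'I_r -> A -> A.
Hypothesis hder : forall i, is_derivation (d i).
Hypothesis hbr : forall i j, exists b : 'I_r -> A,
  forall x, d i (d j x) - d j (d i x) = \sum_(k < r) b k * d k x.

Lemma P0 : P 0. Proof. exact: VP0. Qed.
Lemma PD x y : P x -> P y -> P (x + y). Proof. exact: VPD. Qed.
Lemma PN x : P x -> P (- x). Proof. exact: VPN. Qed.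
Lemma PM x y : P x -> P (y * x). Proof. exact: VPM. Qed.

Lemma PMr x y : P x -> P (x * y).
Proof. by move=> h; rewrite mulrC; apply: PM. Qed.
Lemma PZ (c : CC) x : P x -> P (c *: x).
Proof. by move=> h; rewrite -mulr_algl; apply: PM. Qed.
Lemma PB x y : P x -> P y -> P (x - y).
Proof. by move=> hx hy; apply: PD => //; apply: PN. Qed.
Lemma Psum n (G : 'I_n -> A) : (forall i, P (G i)) -> P (\sum_(i < n) G i).
Proof. by move=> h; elim/big_rec: _ => [|i y _ hy]; [exact: P0|apply: PD]. Qed.

Lemma d_add i : addmap (d i). Proof. by case: (hder i). Qed.
Lemma d_scale i (c : CC) x : d i (c *: x) = c *: d i x. Proof. by case: (hder i). Qed.
Lemma d_mul i x y : d i (x * y) = x * d i y + d i x * y. Proof. by case: (hder i). Qed.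

Lemma iter_add I : addmap (iter_der d I).
Proof. elim: I => [//|i I IH] x y /=; by rewrite IH d_add. Qed.
Lemma iter_scale I (c : CC) x : iter_der d I (c *: x) = c *: iter_der d I x.
Proof. elim: I => [//|i I IH] /=; by rewrite IH d_scale. Qed.
Lemma iter_rcons I i x : iter_der d (rcons I i) x = iter_der d I (d i x).
Proof. by rewrite /iter_der foldr_rcons. Qed.

Definition W p h := forall I : seq 'I_r, (size I < p)%N -> P (iter_der d I h).

Lemma W0 h : W 0 h. Proof. by []. Qed.
Lemma W1P h : W 1 h -> P h. Proof. by move=> h1; exact: (h1 [::]). Qed.
Lemma W_le p q h : (q <= p)%N -> W p h -> W q h.
Proof. move=> le hW I hI; apply: hW; lia. Qed.
Lemma W_add p x y : W p x -> W p y -> W p (x + y).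
Proof. by move=> hx hy I hI; rewrite iter_add; apply: PD; [apply: hx|apply: hy]. Qed.
Lemma W_opp p x : W p x -> W p (- x).
Proof. by move=> hx I hI; rewrite (addfN (iter_add I)); apply: PN; apply: hx. Qed.
Lemma W_sub p x y : W p x -> W p y -> W p (x - y).
Proof. by move=> hx hy; apply: W_add => //; apply: W_opp. Qed.
Lemma W_scale p (c : CC) x : W p x -> W p (c *: x).
Proof. by move=> hx I hI; rewrite iter_scale; apply: PZ; apply: hx. Qed.
Lemma W_zero p : W p 0.
Proof. by move=> I _; rewrite (addf0 (iter_add I)); exact: P0. Qed.
Lemma W_sum p n (G : 'I_n -> A) : (forall i, W p (G i)) -> W p (\sum_(i < n) G i).
Proof. by move=> h; elim/big_rec: _ => [|i y _ hy]; [apply: W_zero|apply: W_add]. Qed.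
Lemma W_der p i h : W p h -> W p.-1 (d i h).
Proof. move=> hW I hI; rewrite -iter_rcons; apply: hW; rewrite size_rcons; lia. Qed.

Lemma W_mul_aux I : forall p q a h, W p a -> W q h -> (size I < p + q)%N ->
  P (iter_der d I (a * h)).
Proof.
elim/last_ind: I => [|I i IH] p q a h ha hh hI /=.
  case: p ha hI => [|p] ha hI; last by apply: PMr; apply: (ha [::]).
  by apply: PM; apply: (hh [::]).
rewrite iter_rcons d_mul iter_add; apply: PD.
  apply: (IH p q.-1) => //; first exact: W_der.
  rewrite size_rcons in hI; lia.
apply: (IH p.-1 q) => //; first exact: W_der.
rewrite size_rcons in hI; lia.
Qed.

Lemma W_mul p q a h : W p a -> W q h -> W (p + q) (a * h).
Proof. by move=> ha hh I hI; apply: (W_mul_aux ha hh). Qed.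

Definition Dc (c : 'I_r -> CC) (x : A) := \sum_(i < r) c i *: d i x.
Definition Eb (b : 'I_r -> A) (x : A) := \sum_(i < r) b i * d i x.

Lemma Dc_add c : addmap (Dc c).
Proof. by move=> x y; rewrite /Dc -big_split; apply: eq_bigr => i _; rewrite d_add scalerDr. Qed.
Lemma Dc_scale c (k : CC) x : Dc c (k *: x) = k *: Dc c x.
Proof. rewrite /Dc scaler_sumr; apply: eq_bigr => i _; by rewrite d_scale !scalerA mulrC. Qed.
Lemma Dc_mul c x y : Dc c (x * y) = x * Dc c y + Dc c x * y.
Proof.
rewrite /Dc mulr_sumr mulr_suml -big_split; apply: eq_bigr => i _ /=.
by rewrite d_mul scalerDr scalerAr scalerAl.
Qed.

Lemma W_Dc p c h : W p h -> W p.-1 (Dc c h).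
Proof. by move=> hh; apply: W_sum => i; apply: W_scale; apply: W_der. Qed.
Lemma W_Eb p b h : W p h -> W p.-1 (Eb b h).
Proof. move=> hh; apply: W_sum => i; exact: (W_mul (p := 0) (W0 _) (W_der _ hh)). Qed.
Lemma W_iterDc p c k h : W p h -> W (p - k) (iter k (Dc c) h).
Proof.
elim: k => [|k IH] hh; first by rewrite subn0.
rewrite iterS; apply: (W_le _ (W_Dc c (IH hh))); lia.
Qed.

Lemma iterDc_add c k : addmap (iter k (Dc c)).
Proof. elim: k => [//|k IH] x y; by rewrite !iterS IH Dc_add. Qed.
Lemma iterDc_scale c k (a : CC) x : iter k (Dc c) (a *: x) = a *: iter k (Dc c) x.
Proof. elim: k => [//|k IH]; by rewrite !iterS IH Dc_scale. Qed.


Let co := contact_order d Y.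
Lemma co_some f k : co f = Some k -> W k f /\ ~ W k.+1 f.
Proof.
rewrite /co /contact_order; case: pselect => // H [<-].
case: ex_minnP => m /asboolP [I [hs hI]] hmin; split.
  move=> J hJ; apply: contrapT => hn.
  have := hmin (size J) (asboolT (ex_intro _ J (conj erefl hn))); lia.
by move=> hW; apply: hI; apply: hW; lia.
Qed.

Lemma co_none f : co f = None -> forall p, W p f.
Proof.
rewrite /co /contact_order; case: pselect => // H _ p I hI.
apply: contrapT => hn; apply: H; by exists (size I), I.
Qed.

Lemma co_eq f k : W k f -> ~ W k.+1 f -> co f = Some k.
Proof.
move=> hk hk1.
have [I [hIs hI]] : exists I : seq 'I_r, size I = k /\ ~ P (iter_der d I f).
  apply: contrapT => hn; apply: hk1 => I hI; apply: contrapT => hP.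
  have hs : size I = k.
    by case: (ltnP (size I) k) => [lt|ge]; [exfalso; apply: hP; apply: hk | lia].
  by apply: hn; exists I.
rewrite /co /contact_order; case: pselect => H; last by exfalso; apply: H; exists k, I.
congr Some; case: ex_minnP => m /asboolP [J [hJs hJ]] hmin.
apply/eqP; rewrite eqn_leq hmin /=; last by apply/asboolP; exists I.
by rewrite leqNgt; apply/negP => lt; apply: hJ; apply: hk; rewrite hJs.
Qed.

Lemma co_inf f : (forall p, W p f) -> co f = None.
Proof.
move=> h; case e: (co f) => [k|] //; have [_ hn] := co_some e; by case: hn.
Qed.

Lemma W_co f p : W p f <-> enat_le (Some p) (co f).
Proof.
case e: (co f) => [k|] /=; last by split=> // _; apply: co_none.
have [hk hk1] := co_some e; split.
  move=> hp; rewrite leqNgt; apply/negP => lt; apply: hk1; exact: W_le hp.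
by move=> le; exact: W_le hk.
Qed.

Lemma enat_le_ext x y : (forall p, enat_le (Some p) x -> enat_le (Some p) y) -> enat_le x y.
Proof.
case: y => [k|] h; last by case: x h.
case: x h => [m|] h /=; first exact: (h m (leqnn m)).
by have := h k.+1 I => /=; rewrite ltnn.
Qed.

Lemma enat_le_min p x y : enat_le (Some p) (enat_min x y) <->
  enat_le (Some p) x /\ enat_le (Some p) y.
Proof. case: x => [m|]; case: y => [n|] //=; rewrite ?leq_min; try tauto.
by split => [/andP//|[-> ->]]. Qed.

Lemma enat_le_antisym x y : enat_le x y -> enat_le y x -> x = y.
Proof. case: x => [m|]; case: y => [n|] //= h1 h2; congr Some; apply/eqP; by rewrite eqn_leq h1 h2. Qed.


Lemma part1a f g : enat_le (enat_min (co f) (co g)) (co (f + g)).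
Proof.
apply: enat_le_ext => p /enat_le_min [/W_co hf /W_co hg]; apply/W_co.
exact: W_add.
Qed.

Lemma part1_aux f g q : co f = Some q -> W q.+1 g -> co (f + g) = Some q.
Proof.
move=> e hg; have [hq hq1] := co_some e; apply: co_eq.
  apply: W_add => //; exact: W_le hg.
move=> h; apply: hq1; have -> : f = (f + g) - g by rewrite addrK.
exact: W_sub.
Qed.

Lemma part1b f g : co f <> co g -> co (f + g) = enat_min (co f) (co g).
Proof.
case ef: (co f) => [m|]; case eg: (co g) => [n|] //= ne.
- have [lt|lt|eq] := ltngtP m n.
  + rewrite (part1_aux ef) ?(minn_idPl (ltnW lt)) //.
    have [hn _] := co_some eg; exact: W_le hn.
  + rewrite addrC (part1_aux eg) ?(minn_idPr (ltnW lt)) //.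
    have [hm _] := co_some ef; exact: W_le hm.
  + by case: ne; rewrite eq.
- by rewrite (part1_aux ef) //; apply: co_none.
- by rewrite addrC (part1_aux eg) //; apply: co_none.
Qed.

Lemma PZinv (c : CC) x : c != 0 -> P (c *: x) -> P x.
Proof. move=> hc h; have -> : x = c^-1 *: (c *: x) by rewrite scalerA mulVf ?scale1r.
exact: PZ. Qed.

Lemma nonvanish h : ~ P h -> exists phi, Y phi /\ phi h != 0.
Proof.
move=> hn; apply: contrapT => hn2; apply: hn => phi hphi; apply/eqP.
apply: contrapT => hne; apply: hn2; exists phi; split => //; exact/negP.
Qed.

Definition eqv (a b : A) := P (a - b).
Lemma eqv_refl a : eqv a a. Proof. rewrite /eqv subrr; exact: P0. Qed.
Lemma eqv_add a b a' b' : eqv a b -> eqv a' b' -> eqv (a + a') (b + b').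
Proof. move=> h h'; rewrite /eqv; have -> : a + a' - (b + b') = (a - b) + (a' - b') by ring.
exact: PD. Qed.
Lemma eqv_P a b : eqv a b -> P b -> P a.
Proof. move=> h hb; have -> : a = (a - b) + b by rewrite subrK. exact: PD. Qed.
Lemma eqv_0 a : P a -> eqv a 0. Proof. by rewrite /eqv subr0. Qed.
Lemma eqv_trans a b c : eqv a b -> eqv b c -> eqv a c.
Proof. move=> h h'; rewrite /eqv; have -> : a - c = (a - b) + (b - c) by ring.
exact: PD. Qed.

Section LeibnizC.
Variable c : 'I_r -> CC.
Local Notation D := (Dc c).
Definition V m x := forall k, (k < m)%N -> P (iter k D x).

Lemma V0 x : V 0 x. Proof. by []. Qed.
Lemma VS m x : V m.+1 x -> V m (D x).
Proof. by move=> h k hk; rewrite -iterSr; apply: h. Qed.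
Lemma Vle m n x : (n <= m)%N -> V m x -> V n x.
Proof. by move=> le h k hk; apply: h; lia. Qed.

Lemma LB N : forall m n x y, (m + n = N)%N -> V m x -> V n y ->
  eqv (iter N D (x * y)) (('C(N, m))%:R *: (iter m D x * iter n D y)).
Proof.
elim: N => [|N IH] m n x y hmn hx hy.
  have [-> ->] : m = 0%N /\ n = 0%N by lia.
  by rewrite bin0 scale1r; apply: eqv_refl.
rewrite iterSr Dc_mul (iterDc_add _ _).
case: m hmn hx => [|m] hmn hx; case: n hmn hy => [|n] hmn hy //.
-
  have e : n = N by lia. subst n.
  have h1 := IH 0%N N x (D y) erefl (V0 _) (VS hy).
  have h2 := IH 0%N N (D x) y erefl (V0 _) (Vle (leqnSn N) hy).
  rewrite -iterSr in h1.
  have h2' : eqv (iter N D (D x * y)) 0.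
    apply: (eqv_trans h2); apply: eqv_0; apply: PZ; apply: PM; exact: hy.
  rewrite bin0; have := eqv_add h1 h2'; by rewrite bin0 addr0.
-
  have e : m = N by lia. subst m.
  have h1 := IH N 0%N x (D y) (addn0 N) (Vle (leqnSn N) hx) (V0 _).
  have h2 := IH N 0%N (D x) y (addn0 N) (VS hx) (V0 _).
  have h1' : eqv (iter N D (x * D y)) 0.
    apply: (eqv_trans h1); apply: eqv_0; apply: PZ; apply: PMr; exact: hx.
  rewrite -iterSr in h2.
  rewrite binn; have := eqv_add h1' h2; by rewrite binn add0r.
- have h1 := IH m.+1 n x (D y) ltac:(lia) hx (VS hy).
  have h2 := IH m n.+1 (D x) y ltac:(lia) (VS hx) hy.
  rewrite -iterSr in h1; rewrite -iterSr in h2.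
  by have := eqv_add h1 h2; rewrite -scalerDl -natrD -binS.
Qed.
End LeibnizC.

Lemma final m n f g c : W m f -> W n g -> ~ P (iter m (Dc c) f) ->
  ~ P (iter n (Dc c) g) -> ~ W (m + n).+1 (f * g).
Proof.
move=> hf hg nf ng hfg.
have hV : forall p h, W p h -> V c p h.
  move=> p h hh k hk; apply: W1P; apply: (W_le _ (W_iterDc (k := k) c hh)); lia.
have := LB (erefl (m + n)%N) (hV _ _ hf) (hV _ _ hg) => hL.
have hP : P (iter (m + n) (Dc c) (f * g)).
  apply: W1P; apply: (W_le _ (W_iterDc (k := (m + n)%N) c hfg)); lia.
have : P (('C(m + n, m))%:R *: (iter m (Dc c) f * iter n (Dc c) g)).
  by move: (PB hP hL); rewrite opprB addrC subrK.
have hb : (0 < 'C(m + n, m))%N by rewrite bin_gt0 leq_addr.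
move/PZinv => /(_ (CC_natr_neq0 hb)) /hprime [] //.
Qed.


Lemma br_W p i l x : W p x -> W p.-1 (d i (d l x) - d l (d i x)).
Proof. move=> hx; have [b hb] := hbr i l; rewrite hb; exact: W_Eb. Qed.

Lemma brDc_W p i c x : W p x -> W p.-1 (d i (Dc c x) - Dc c (d i x)).
Proof.
move=> hx; rewrite /Dc (addf_sum _ (d_add i)).
rewrite -sumrB; apply: W_sum => l; rewrite d_scale -scalerBr.
apply: W_scale; exact: br_W.
Qed.

Lemma comm_W i c k : forall h p, (k <= p)%N -> W p h ->
  W (p - k) (d i (iter k (Dc c) h) - iter k (Dc c) (d i h)).
Proof.
elim: k => [|k IH] h p hk hh.
  rewrite /= subrr; exact: W_zero.
rewrite !iterS.
have -> : d i (Dc c (iter k (Dc c) h)) - Dc c (iter k (Dc c) (d i h)) =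
  (d i (Dc c (iter k (Dc c) h)) - Dc c (d i (iter k (Dc c) h))) +
  Dc c (d i (iter k (Dc c) h) - iter k (Dc c) (d i h)).
  by rewrite (addfB (Dc_add c)); ring.
apply: W_add.
  apply: (W_le _ (brDc_W i c (W_iterDc (k := k) c hh))); lia.
apply: (W_le _ (W_Dc c (IH h p ltac:(lia) hh))); lia.
Qed.

Fixpoint cf (D E : A -> A) (k j : nat) (h : A) : A :=
  match k with
  | 0 => if j == 0%N then h else 0
  | k'.+1 => D (cf D E k' j h) + (if j is j'.+1 then E (cf D E k' j' h) else 0)
  end.

Lemma cf0 D E k h : cf D E k 0 h = iter k D h.
Proof. by elim: k => [|k IH] //=; rewrite IH addr0. Qed.

Lemma cf_big D E k j h : addmap D -> addmap E -> (k < j)%N -> cf D E k j h = 0.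
Proof.
move=> hD hE; elim: k j => [|k IH] j hj /=; first by case: j hj.
case: j hj => [//|j] hj; rewrite (IH j.+1) ?(IH j) ?(addf0 hD) ?(addf0 hE) ?addr0 //; lia.
Qed.

Lemma iter_Lt D E (t : CC) k h : addmap D -> addmap E ->
  (forall (a : CC) x, D (a *: x) = a *: D x) ->
  (forall (a : CC) x, E (a *: x) = a *: E x) ->
  iter k (fun x => D x + t *: E x) h = \sum_(j < k.+1) t ^+ j *: cf D E k j h.
Proof.
move=> hD hE sD sE; elim: k => [|k IH].
  by rewrite big_ord_recl big_ord0 /= expr0 scale1r addr0.
rewrite iterS IH (addf_sum _ hD) (addf_sum _ hE) scaler_sumr.
rewrite [RHS](eq_bigr (fun j : 'I_k.+2 => t ^+ j *: D (cf D E k j h) +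
   t ^+ j *: (if (j : nat) is j'.+1 then E (cf D E k j' h) else 0))); last first.
  by move=> j _ /=; rewrite scalerDr.
rewrite big_split /=; congr (_ + _).
  rewrite [RHS]big_ord_recr /= (@cf_big D E k k.+1 h hD hE (ltnSn k)) (addf0 hD) scaler0 addr0.
  by apply: eq_bigr => j _; rewrite sD.
rewrite [RHS]big_ord_recl /= scaler0 add0r; apply: eq_bigr => j _.
rewrite sE scalerA -exprS.
by rewrite /bump leq0n add0n add1n.
Qed.

Lemma phi_eval phi n (t : CC) (G : nat -> A) : is_point phi ->
  phi (\sum_(j < n) t ^+ j *: G j) = (\poly_(j < n) phi (G j)).[t].
Proof.
move=> hp; rewrite horner_poly; have [ha _ _ hs] := hp.
elim/big_rec2: _ => [|j y1 y2 _ <-]; first exact: pt0.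
by rewrite ha hs mulrC.
Qed.

Lemma nonroot (p q : {poly CC}) : p != 0 -> q != 0 ->
  exists t, p.[t] != 0 /\ q.[t] != 0.
Proof.
move=> hp hq; have hs : p * q != 0 by rewrite mulf_neq0.
pose rs := [seq (i%:R : CC) | i <- iota 0 (size (p * q))].
case: (boolP (all (root (p * q)) rs)) => [hall|].
  have hu : uniq rs.
    rewrite map_inj_uniq ?iota_uniq // => i j /eqP.
    by rewrite /CC eqr_nat => /eqP.
  by have := max_poly_roots hs hall hu; rewrite size_map size_iota ltnn.
move/allPn => [t _]; rewrite /root hornerM mulf_eq0 negb_or => /andP [h1 h2].
by exists t.
Qed.

Lemma Dc_line a u (t : CC) x : Dc a x + t *: Dc u x = Dc (fun k => a k + t * u k) x.
Proof.
rewrite /Dc scaler_sumr -big_split; apply: eq_bigr => k _ /=.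
by rewrite scalerA scalerDl.
Qed.

Lemma Dc_unit i x : Dc (fun k => (k == i)%:R) x = d i x.
Proof.
rewrite /Dc (bigD1 i) //= eqxx scale1r big1 ?addr0 // => k /negPf ->.
by rewrite scale0r.
Qed.

Lemma ptP phi h : Y phi -> phi h != 0 -> ~ P h.
Proof. by move=> hY hn hP; move: hn; rewrite (hP phi hY) eqxx. Qed.

Lemma stepL m n f g a b : ~ P (iter m (Dc a) f) -> ~ P (iter n (Dc b) g) ->
  exists c, ~ P (iter m (Dc c) f) /\ ~ P (iter n (Dc c) g).
Proof.
move=> hf hg.
have hxy : ~ P (iter m (Dc a) f * iter n (Dc b) g) by case/hprime.
have [phi [hphi hne]] := nonvanish hxy.
have hpt := hYp hphi; have [_ hmul _ _] := hpt.
move: hne; rewrite hmul mulf_eq0 negb_or => /andP [hx hy].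
pose u := fun i => b i - a i.
pose ct := fun (t : CC) i => a i + t * u i.
have hL : forall t, Dc (ct t) = (fun x => Dc a x + t *: Dc u x).
  by move=> t; apply: funext => x; rewrite Dc_line.
have hexp : forall k h t, phi (iter k (Dc (ct t)) h) =
    (\poly_(j < k.+1) phi (cf (Dc a) (Dc u) k j h)).[t].
  move=> k h t; rewrite hL iter_Lt.
  - exact: (@phi_eval phi k.+1 t (fun j => cf (Dc a) (Dc u) k j h) hpt).
  - exact: Dc_add.
  - exact: Dc_add.
  - exact: Dc_scale.
  - exact: Dc_scale.
have ct0 : ct 0 = a by apply: funext => i; rewrite /ct mul0r addr0.
have ct1 : ct 1 = b by apply: funext => i; rewrite /ct /u mul1r addrC subrK.
pose p := \poly_(j < m.+1) phi (cf (Dc a) (Dc u) m j f).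
pose q := \poly_(j < n.+1) phi (cf (Dc a) (Dc u) n j g).
have hp : p != 0.
  apply/negP => /eqP p0; move: hx; rewrite -ct0 hexp -/p p0 horner0.
  by rewrite eqxx.
have hq : q != 0.
  apply/negP => /eqP q0; move: hy; rewrite -ct1 hexp -/q q0 horner0.
  by rewrite eqxx.
have [t [ht1 ht2]] := nonroot hp hq.
exists (ct t); split; apply: (ptP hphi); rewrite hexp //.
Qed.

Lemma cf1_W i c k : forall h p, (k <= p)%N -> W p h ->
  W (p - k).+1 (cf (Dc c) (d i) k 1 h - k%:R *: iter k.-1 (Dc c) (d i h)).
Proof.
elim: k => [|k IH] h p hk hh.
  rewrite /= scale0r subrr; exact: W_zero.
rewrite /= cf0.
have e : k%:R *: Dc c (iter k.-1 (Dc c) (d i h)) = k%:R *: iter k (Dc c) (d i h).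
  by case: k {IH hk} => [|k]; rewrite ?scale0r // iterS.
have -> : Dc c (cf (Dc c) (d i) k 1 h) + d i (iter k (Dc c) h) -
    k.+1%:R *: iter k (Dc c) (d i h) =
  Dc c (cf (Dc c) (d i) k 1 h - k%:R *: iter k.-1 (Dc c) (d i h)) +
  (d i (iter k (Dc c) h) - iter k (Dc c) (d i h)).
  rewrite (addfB (Dc_add c)) Dc_scale e mulrSr scalerDl scale1r; ring.
apply: W_add.
  apply: (W_le _ (W_Dc c (IH h p ltac:(lia) hh))); lia.
have hkp : (k <= p)%N by lia.
apply: (W_le _ (comm_W i c hkp hh)); lia.
Qed.


Lemma notW_ex p h : W p h -> ~ W p.+1 h ->
  exists I : seq 'I_r, size I = p /\ ~ P (iter_der d I h).
Proof.
move=> hk hk1; apply: contrapT => hn; apply: hk1 => I hI; apply: contrapT => hP.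
have hs : size I = p.
  by case: (ltnP (size I) p) => [lt|ge]; [exfalso; apply: hP; apply: hk | lia].
by apply: hn; exists I.
Qed.

Lemma stepG m : forall f, W m f -> ~ W m.+1 f -> exists c, ~ P (iter m (Dc c) f).
Proof.
elim: m => [|m IH] f hm hm1.
  exists (fun _ => 0) => /= hP; apply: hm1 => I; case: I => //= _ _; exact: hP.
have [I [hIs hI]] := notW_ex hm hm1.
case/lastP: I hIs hI => [//|I i] hIs hI.
rewrite iter_rcons in hI; rewrite size_rcons in hIs.
have hdm : W m (d i f) by exact: (W_der i hm).
have hdm1 : ~ W m.+1 (d i f).
  by move=> hW; apply: hI; apply: hW; case: hIs => ->.
have [c' hc'] := IH _ hdm hdm1.
pose D := Dc c'.
have hcf := cf1_W i c' (leqnn m.+1) hm.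
rewrite subnn /= in hcf.
have hncf : ~ P (cf D (d i) m.+1 1 f).
  move=> hP; apply: hc'; apply: (PZinv (c := m.+1%:R)); first exact: CC_natr_neq0.
  have hW1 := W1P hcf.
  by move: (PB hP hW1); rewrite opprB addrC subrK.
have [phi [hphi hne]] := nonvanish hncf.
have hpt := hYp hphi.
pose p := \poly_(j < m.+2) phi (cf D (d i) m.+1 j f).
have hp : p != 0.
  by apply/negP => /eqP p0; move: hne; have := coef_poly m.+2 (fun j => phi (cf D (d i) m.+1 j f)) 1;
    rewrite -/p p0 coef0 /= => <-; rewrite eqxx.
have [t [ht _]] := nonroot hp hp.
exists (fun k => c' k + t * (k == i)%:R).
have hL : Dc (fun k => c' k + t * (k == i)%:R) = (fun x => D x + t *: d i x).
  by apply: funext => x; rewrite -Dc_line Dc_unit.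
rewrite hL; apply: (ptP hphi).
rewrite iter_Lt.
- by rewrite (@phi_eval phi m.+2 t (fun j => cf D (d i) m.+1 j f) hpt).
- exact: Dc_add.
- exact: d_add.
- exact: Dc_scale.
- exact: d_scale.
Qed.

Lemma mult_core m n f g : W m f -> ~ W m.+1 f -> W n g -> ~ W n.+1 g ->
  ~ W (m + n).+1 (f * g).
Proof.
move=> hf hf1 hg hg1.
have [a ha] := stepG hf hf1; have [b hb] := stepG hg hg1.
have [c [hc1 hc2]] := stepL ha hb.
exact: final hf hg hc1 hc2.
Qed.

Lemma part2 f g : co (f * g) = enat_add (co f) (co g).
Proof.
case ef: (co f) => [m|]; case eg: (co g) => [n|] /=.
- have [hm hm1] := co_some ef; have [hn hn1] := co_some eg.
  apply: co_eq; [exact: W_mul | exact: mult_core].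
- apply: co_inf => p; have := W_mul (W0 f) (co_none (p:=p) eg); by rewrite add0n.
- apply: co_inf => p; have := W_mul (co_none (p:=p) ef) (W0 g); by rewrite addn0.
- apply: co_inf => p; have := W_mul (co_none (p:=p) ef) (W0 g); by rewrite addn0.
Qed.

End Big.

Unset Implicit Arguments.

Theorem mainTheorem5
  (A : comAlgType CC)
  (hfg : finitely_generated_algebra A)
  (hdom : integral_domain A)
  (F : (A -> A) -> Prop)
  (hF : algebraic_foliation F)
  (r : nat) (d : 'I_r -> A -> A)
  (hd : generates_module F d)
  (Y : (A -> CC) -> Prop)
  (hY : irreducible_closed Y) :
  forall f g : A,
    (enat_le (enat_min (contact_order d Y f) (contact_order d Y g))
             (contact_order d Y (f + g)) /\
     (contact_order d Y f <> contact_order d Y g ->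
      contact_order d Y (f + g) =
        enat_min (contact_order d Y f) (contact_order d Y g))) /\
    contact_order d Y (f * g) =
      enat_add (contact_order d Y f) (contact_order d Y g).
Proof.
move=> f g.
have [[S hS] _ hirr] := hY.
have hYp : forall phi, Y phi -> is_point phi.
  by move=> phi hphi; have [] := (hS phi).1 hphi.
have hprime : forall x y, vanishes_on Y (x * y) -> vanishes_on Y x \/ vanishes_on Y y.
  move=> x y hxy.
  have cl : forall z, zariski_closed (fun phi => Y phi /\ phi z = 0).
    move=> z; exists (fun h => S h \/ h = z) => phi; split.
      move=> [hphi hz]; have [hp hs] := (hS phi).1 hphi; split => // h [hh| ->] //.
      exact: hs.
    move=> [hp hs]; split; last by apply: hs; right.
    by apply/(hS phi).2; split => // h hh; apply: hs; left.
  have := hirr _ _ (cl x) (cl y).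
  case.
  - move=> phi hphi; have [_ hm _ _] := hYp _ hphi.
    by move: (hxy phi hphi); rewrite hm => /eqP; rewrite mulf_eq0 => /orP [] /eqP;
      [left|right].
  - by move=> h; left => phi hphi; case: (h phi hphi).
  - by move=> h; right => phi hphi; case: (h phi hphi).
have hder : forall i, is_derivation (d i) by move=> i; apply: (M_der hF); exact: hd.1.
have hbr := gen_bracket hF hd.
split; first split.
- exact: (part1a hYp hder).
- exact: (part1b hYp hder).
- exact: (part2 hYp hprime hder hbr).
Qed.
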